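(* Let $\{\pi_\theta\}_{\theta\in\Theta}$, $\Theta\subseteq\mathbb R^d$ open, be a family of stationary policies with $\theta\mapsto\pi_\theta(a|s)$ differentiable for all $s,a$, and assume each $\sigma(P_{s,a},\cdot):\mathbb R^{\mathcal S}\to\mathbb R$ is differentiable. Then $\theta\mapsto V^{\pi_\theta}(s)$ is differentiable for every $s$ and $$\nabla_\theta V^{\pi_\theta}(s)=\mathbb E\Big[\sum_{t=0}^{\infty}\gamma^t\,Q^{\pi_\theta}(s_t,a_t)\,\nabla_\theta\log\pi_\theta(a_t|s_t)\,\Big|\,s_0=s\Big],$$ where the expectation is over trajectories with $a_t\sim\pi_\theta(\cdot|s_t)$ and $s_{t+1}\sim\hat P^{\pi_\theta}_{s_t,a_t}$.
   Context: $\mathcal S$ and $\mathcal A$ are finite sets; $\Delta(\mathcal X)$ denotes the probability simplex over a finite set $\mathcal X$. $P=\{P_{s,a}\}$ with $P_{s,a}\in\Delta(\mathcal S)$ is the nominal transition kernel, $r:\mathcal S\times\mathcal A\to[0,1]$, $\gamma\in[0,1)$. A stationary policy is a map $\pi:\mathcal S\to\Delta(\mathcal A)$. A function $\sigma:\mathbb R^{\mathcal S}\to\mathbb R$ is a convex risk measure if (i) $V'\le V$ pointwise implies $\sigma(V)\le\sigma(V')$; (ii) $\sigma(V+m)=\sigma(V)-m$ for every constant $m$; (iii) $\sigma$ is convex. For each $(s,a)$ a convex risk measure $\sigma(P_{s,a},\cdot)$ is given, with penalty $D(\hat\mu,P_{s,a}):=\sup_{V}\big(-\sigma(P_{s,a},V)-\mathbb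 E_{s'\sim\hat\mu}V(s')\big)$ for $\hat\mu\in\Delta(\mathcal S)$. For a policy $\pi$, $V^\pi$ is the unique solution of $V^\pi(s)=\sum_a\pi(a|s)(r(s,a)-\gamma\sigma(P_{s,a},V^\pi))$, $Q^\pi(s,a):=r(s,a)-\gamma\sigma(P_{s,a},V^\pi)$, and $\hat P^\pi_{s,a}\in\arg\min_{\hat\mu\in\Delta(\mathcal S)}\big(D(\hat\mu,P_{s,a})+\mathbb E_{s'\sim\hat\mu}V^\pi(s')\big)$. *)

(* Defs.v *)
From HB Require Import structures.
From mathcomp Require Import all_boot all_order all_algebra.
From mathcomp Require Import all_classical all_reals all_analysis.
Set Implicit Arguments.
Unset Strict Implicit.
Unset Printing Implicit Defensive.
Import Order.TTheory GRing.Theory Num.Theory.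
Import numFieldNormedType.Exports.
Local Open Scope ring_scope.
Local Open Scope classical_set_scope.

Definition is_dist (R : realType) (X : finType) (mu : X -> R) : Prop :=
  (forall x, 0 <= mu x) /\ \sum_(x : X) mu x = 1.

Definition expect (R : realType) (X : finType) (mu : X -> R) (V : X -> R) : R :=
  \sum_(x : X) mu x * V x.

Definition convex_risk_measure (R : realType) (X : finType)
  (rho : (X -> R) -> R) : Prop :=
  [/\ (forall V V' : X -> R, (forall x, V' x <= V x) -> rho V <= rho V'),
      (forall (V : X -> R) (m : R), rho (fun x => V x + m) = rho V - m) &
      (forall (V V' : X -> R) (l : R), 0 <= l <= 1 ->
         rho (fun x => l * V x + (1 - l) * V' x) <= l * rho V + (1 - l) * rho V')].

(* penalty D(muhat, P_{s,a}) = sup_V (-sigma(P_{s,a},V) - E_muhat V), with rho = sigma(P_{s,a},.) *)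
Definition penalty (R : realType) (X : finType) (rho : (X -> R) -> R)
  (muhat : X -> R) : \bar R :=
  ereal_sup [set ((- rho V - expect muhat V)%:E) | V in [set: X -> R]].

Definition bellman (R : realType) (S A : finType) (r : S -> A -> R) (gamma : R)
  (rho : S -> A -> (S -> R) -> R) (pi : S -> A -> R) (V : S -> R) : Prop :=
  forall s, V s = \sum_(a : A) pi s a * (r s a - gamma * rho s a V).

Definition Qfun (R : realType) (S A : finType) (r : S -> A -> R) (gamma : R)
  (rho : S -> A -> (S -> R) -> R) (V : S -> R) (s : S) (a : A) : R :=
  r s a - gamma * rho s a V.

(* law of s_t for the chain s_0 = s0, a_t ~ pi(.|s_t), s_{t+1} ~ Ph_{s_t,a_t} *)
Fixpoint state_dist (R : realType) (S A : finType) (pi : S -> A -> R)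
  (Ph : S -> A -> S -> R) (s0 : S) (t : nat) : S -> R :=
  match t with
  | 0 => fun s => (s == s0)%:R
  | t'.+1 => fun s'' => \sum_(s' : S) \sum_(a : A)
               state_dist pi Ph s0 t' s' * pi s' a * Ph s' a s''
  end.

Definition grad (R : realType) (d : nat) (f : 'rV[R]_d -> R) (th : 'rV[R]_d)
  : 'rV[R]_d := \row_(i < d) ('D_(delta_mx 0 i) f th).

Definition of_rV (R : realType) (S : finType) (w : 'rV[R]_#|S|) : S -> R :=
  fun s => w ord0 (enum_rank s).

(* Main.v *)
Require Import Defs.
From HB Require Import structures.
From mathcomp Require Import all_boot all_order all_algebra.
From mathcomp Require Import all_classical all_reals all_analysis.
From mathcomp Require Import ring lra.
Import Order.TTheory GRing.Theory Num.Theory.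
Import numFieldNormedType.Exports.
Local Open Scope ring_scope.
Local Open Scope classical_set_scope.

Lemma mx_entry_le (R : realType) m n (M : 'M[R]_(m, n)) i j : `|M i j| <= `|M|.
Proof.
have -> : `|M| = mx_norm M by []. rewrite mx_normrE.
by apply/bigmax_geP; right => /=; exists (i, j).
Qed.

Lemma mx_norm_leP (R : realType) m n (M : 'M[R]_(m, n)) c :
  0 <= c -> (forall i j, `|M i j| <= c) -> `|M| <= c.
Proof.
move=> c0 H; have -> : `|M| = mx_norm M by []. rewrite mx_normrE.
by apply: bigmax_le => // -[i j] _; apply: H.
Qed.

Lemma sum_enum (R : realType) (S : finType) (F : S -> R) :
  \sum_(s : S) F s = \sum_(k < #|S|) F (enum_val k).
Proof. rewrite (reindex (@enum_val S predT)) //; exists (@enum_rank S) => x _; [exact: enum_valK|exact: enum_rankK]. Qed.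

Lemma lin_bound (R : realType) d (L : {linear 'rV[R]_d -> R}) (h : 'rV[R]_d) :
  `|L h| <= (\sum_i `|L (delta_mx 0 i)|) * `|h|.
Proof.
rewrite {1}(row_sum_delta h) linear_sum mulr_suml.
apply: (le_trans (ler_norm_sum _ _ _)); apply: ler_sum => i _.
rewrite linearZ normrM mulrC; apply: ler_wpM2l => //.
exact: mx_entry_le.
Qed.


Lemma diff_eps (R : realType) (V : normedModType R) (f : V -> R) x :
  differentiable f x -> forall e, 0 < e ->
  \forall h \near (0:V), `|f (x + h) - f x - 'd f x h| <= e * `|h|.
Proof.
move=> /diff_locally /eqaddoP H e e0; have := H e e0; apply: filterS => h /=.
by rewrite !fctE /= [h + x]addrC opprD addrA.
Qed.

Lemma diff_of_eps (R : realType) (V : normedModType R) (f : V -> R) x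
  (df : {linear V -> R}) : continuous df ->
  (forall e, 0 < e -> \forall h \near (0:V), `|f (x + h) - f x - df h| <= e * `|h|) ->
  differentiable f x /\ 'd f x = df :> (V -> R).
Proof.
move=> dfc H.
have E : f \o shift x = cst (f x) + df +o_ 0 id.
  apply/eqaddoP => e e0; have := H e e0; apply: filterS => h /=.
  by rewrite !fctE /= [h + x]addrC opprD addrA.
have dE := diff_unique dfc E.
split => //; apply/diff_locallyP; rewrite dE; split => //.
Qed.

Lemma max_contr (R : realType) (T : finType) (g : R) (x : T -> R) b :
  0 <= g < 1 ->
  (forall M, (forall t, `|x t| <= M) -> forall t, `|x t| <= b + g * M) ->
  forall t, `|x t| <= b / (1 - g).
Proof.
move=> /andP[g0 g1] H t0.
set M := \big[Num.max/0]_t `|x t|.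
have HM : forall t, `|x t| <= M.
  by move=> t; apply/bigmax_geP; right; exists t.
have H2 := H M HM.
have HMb : M <= b + g * M.
  apply: bigmax_le => [|t _]; last exact: H2.
  exact: le_trans (normr_ge0 _) (H2 t0).
apply: (le_trans (HM t0)).
rewrite ler_pdivlMr; last by lra.
nra.
Qed.

Lemma near0_ball {R : realType} {V : normedModType R} {P : V -> Prop} :
  (\forall h \near (0:V), P h) -> exists2 r : R, 0 < r & forall h, `|h| < r -> P h.
Proof. by move=> /nbhs_norm0P [r r0 H]; exists r. Qed.

Lemma dir_le {R : realType} {V : normedModType R} (f : V -> R) x v c :
  differentiable f x ->
  (exists2 dl : R, 0 < dl & forall l, 0 < l < dl -> f (x + l *: v) - f x <= l * c) ->
  'd f x v <= c.
Proof.
move=> df [dl dl0 H]; apply/ler_addgt0Pr => e e0.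
set nv := `|v|.
have nv0 : 0 <= nv by exact: normr_ge0.
have ee0 : 0 < e / (nv + 1) by rewrite divr_gt0 //; lra.
have [r r0 Hr] := near0_ball (@diff_eps _ _ f x df _ ee0).
set l := Num.min (dl / 2) (r / (2 * (nv + 1))).
have l1 : l <= dl / 2 by rewrite /l ge_min lexx.
have l2 : l <= r / (2 * (nv + 1)) by rewrite /l ge_min lexx orbT.
have l0 : 0 < l by rewrite /l lt_min; apply/andP; split; rewrite divr_gt0 //; lra.
have Hl : `|l *: v| < r.
  rewrite normrZ gtr0_norm // -/nv.
  have : r / (2 * (nv + 1)) * (2 * (nv + 1)) = r by rewrite divfK //; lra.
  nra.
have := Hr _ Hl; rewrite linearZ /= normrZ gtr0_norm // -/nv => H1.
have H2 : f (x + l *: v) - f x <= l * c by apply: H; apply/andP; split => //; lra.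
have H3 : l * 'd f x v <= l * (c + e).
  have : `|f (x + l *: v) - f x - l * 'd f x v| <= e / (nv + 1) * (l * nv) by [].
  rewrite ler_norml => /andP[H4 _].
  have : e / (nv + 1) * nv <= e.
    rewrite mulrAC ler_pdivrMr; last by lra.
    nra.
  nra.
by rewrite -(ler_pM2l l0).
Qed.

Lemma dir_ge {R : realType} {V : normedModType R} (f : V -> R) x v c :
  differentiable f x ->
  (exists2 dl : R, 0 < dl & forall l, 0 < l < dl -> l * c <= f (x + l *: v) - f x) ->
  c <= 'd f x v.
Proof.
move=> df [dl dl0 H]; apply/ler_addgt0Pr => e e0.
set nv := `|v|.
have nv0 : 0 <= nv by exact: normr_ge0.
have ee0 : 0 < e / (nv + 1) by rewrite divr_gt0 //; lra.
have [r r0 Hr] := near0_ball (@diff_eps _ _ f x df _ ee0).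
set l := Num.min (dl / 2) (r / (2 * (nv + 1))).
have l1 : l <= dl / 2 by rewrite /l ge_min lexx.
have l2 : l <= r / (2 * (nv + 1)) by rewrite /l ge_min lexx orbT.
have l0 : 0 < l by rewrite /l lt_min; apply/andP; split; rewrite divr_gt0 //; lra.
have Hl : `|l *: v| < r.
  rewrite normrZ gtr0_norm // -/nv.
  have : r / (2 * (nv + 1)) * (2 * (nv + 1)) = r by rewrite divfK //; lra.
  nra.
have := Hr _ Hl; rewrite linearZ /= normrZ gtr0_norm // -/nv => H1.
have H2 : l * c <= f (x + l *: v) - f x by apply: H; apply/andP; split => //; lra.
have H3 : l * c <= l * ('d f x v + e).
  have : `|f (x + l *: v) - f x - l * 'd f x v| <= e / (nv + 1) * (l * nv) by [].
  rewrite ler_norml => /andP[_ H4].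
  have : e / (nv + 1) * nv <= e.
    rewrite mulrAC ler_pdivrMr; last by lra.
    nra.
  nra.
by rewrite -(ler_pM2l l0).
Qed.

Lemma diff_eq_lower {R : realType} {V : normedModType R} (f : V -> R) x
  (ell : V -> R) : (forall t v, ell (t *: v) = t * ell v) ->
  differentiable f x ->
  (exists2 r : R, 0 < r & forall h, `|h| < r -> f x + ell h <= f (x + h)) ->
  forall v, 'd f x v = ell v.
Proof.
move=> hl df [r r0 H] v.
have key : forall w, ell w <= 'd f x w.
  move=> w; apply: dir_ge => //.
  exists (r / (`|w| + 1)); first by rewrite divr_gt0 //; have := normr_ge0 w; lra.
  move=> l /andP[l0 l1]; rewrite -hl; have := H (l *: w).
  have nw := normr_ge0 w.
  have : r / (`|w| + 1) * (`|w| + 1) = r by rewrite divfK //; lra.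
  rewrite normrZ gtr0_norm // => E H1.
  have : l * `|w| < r by nra.
  by move=> /H1; lra.
apply/eqP; rewrite eq_le key andbT.
have := key (- v); rewrite linearN -scaleN1r hl.
lra.
Qed.

Lemma avg_bound (R : realType) (T : finType) (w x : T -> R) M :
  (forall t, 0 <= w t) -> \sum_t w t = 1 -> (forall t, `|x t| <= M) ->
  `|\sum_t w t * x t| <= M.
Proof.
move=> w0 w1 xM; apply: (le_trans (ler_norm_sum _ _ _)).
rewrite -[M]mul1r -w1 mulr_suml; apply: ler_sum => t _.
by rewrite normrM ger0_norm // ler_wpM2l.
Qed.

Definition solfix {R : realType} {T : finType} (K : T -> T -> R) (g : R)
  (y : T -> R) : T -> R :=
  let A := (1%:M - g *: \matrix_(i, j) K (enum_val i) (enum_val j) : 'M[R]_#|T|) in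
  fun t => (invmx A *m \col_i y (enum_val i)) (enum_rank t) 0.

Lemma solfixP (R : realType) (T : finType) (K : T -> T -> R) (g : R) (y : T -> R) :
  0 <= g < 1 -> (forall t t', 0 <= K t t') -> (forall t, \sum_t' K t t' = 1) ->
  forall t, solfix K g y t = y t + g * \sum_t' K t t' * solfix K g y t'.
Proof.
move=> hg K0 K1.
set M := \matrix_(i, j) K (enum_val i) (enum_val j) : 'M[R]_#|T|.
set A := (1%:M - g *: M).
have AE : forall (w : 'cV[R]_#|T|) k, (A *m w) k 0 =
    w k 0 - g * \sum_(t' : T) K (enum_val k) t' * w (enum_rank t') 0.
  move=> w k; rewrite /A mulmxBl mul1mx -scalemxAl !mxE; congr (_ - g * _).
  rewrite [RHS]sum_enum; apply: eq_bigr => j _; rewrite !mxE enum_valK //.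
have Au : A \in unitmx.
  rewrite -unitmx_tr -row_free_unit; apply: inj_row_free => v Hv.
  have Hw : A *m v^T = 0 by apply: trmx_inj; rewrite trmx_mul trmxK Hv trmx0.
  pose xv t := v 0 (enum_rank t).
  have Hx : forall t, xv t = 0 + g * \sum_t' K t t' * xv t'.
    move=> t; have := congr1 (fun m : 'M[R]_(#|T|,1) => m (enum_rank t) 0) Hw.
    rewrite AE !mxE enum_rankK add0r => /eqP; rewrite subr_eq0 => /eqP E.
    rewrite /xv E; congr (g * _); apply: eq_bigr => t' _; rewrite !mxE //.
  have Hb := @max_contr R T g xv 0 hg.
  apply/rowP => k; rewrite mxE.
  have : `|xv (enum_val k)| <= 0 / (1 - g).
    apply: Hb => Mx HM t; rewrite Hx add0r normrM ger0_norm; last by case/andP: hg.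
    rewrite add0r; apply: ler_wpM2l; first by case/andP: hg.
    by apply: avg_bound.
  rewrite mul0r /xv enum_valK normr_le0 => /eqP //.
move=> t; rewrite /solfix -/M -/A.
set x := invmx A *m _.
have Ax : A *m x = \col_i y (enum_val i) by rewrite /x mulKVmx.
have := congr1 (fun m : 'M[R]_(#|T|,1) => m (enum_rank t) 0) Ax.
rewrite AE !mxE enum_rankK => <-.
by rewrite subrK.
Qed.

Definition to_rV {R : realType} {S : finType} (V : S -> R) : 'rV[R]_#|S| :=
  \row_k V (enum_val k).

Lemma of_rVK {R : realType} {S : finType} (V : S -> R) : of_rV (to_rV V) = V.
Proof. by apply/funext => s; rewrite /of_rV /to_rV mxE enum_rankK. Qed.

Lemma of_rV_lin {R : realType} {S : finType} (a b : R) (v w : 'rV[R]_#|S|) :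
  of_rV (a *: v + b *: w) = fun s => a * of_rV v s + b * of_rV w s.
Proof. by apply/funext => s; rewrite /of_rV !mxE. Qed.

Lemma of_rVD {R : realType} {S : finType} (v w : 'rV[R]_#|S|) s :
  of_rV (v + w) s = of_rV v s + of_rV w s.
Proof. by rewrite /of_rV !mxE. Qed.

Lemma of_rVB {R : realType} {S : finType} (v w : 'rV[R]_#|S|) s :
  of_rV (v - w) s = of_rV v s - of_rV w s.
Proof. by rewrite /of_rV !mxE. Qed.

Lemma of_rVZ {R : realType} {S : finType} (a : R) (v : 'rV[R]_#|S|) s :
  of_rV (a *: v) s = a * of_rV v s.
Proof. by rewrite /of_rV !mxE. Qed.

Lemma rV_expand {R : realType} {S : finType} (L : {linear 'rV[R]_#|S| -> R}) w :
  L w = \sum_s of_rV w s * L (delta_mx 0 (enum_rank s)).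
Proof.
rewrite {1}(row_sum_delta w) linear_sum [RHS]sum_enum; apply: eq_bigr => k _.
by rewrite linearZ /of_rV enum_valK.
Qed.

Lemma sigma_grad (R : realType) (S : finType) (rho : (S -> R) -> R)
  (Ph V0 : S -> R) :
  convex_risk_measure rho ->
  (forall v, differentiable (fun w : 'rV[R]_#|S| => rho (of_rV w)) v) ->
  is_dist Ph ->
  (forall mu, is_dist mu ->
     (penalty rho Ph + (expect Ph V0)%:E <= penalty rho mu + (expect mu V0)%:E)%E) ->
  forall w, 'd (fun w : 'rV[R]_#|S| => rho (of_rV w)) (to_rV V0) w
            = - \sum_s Ph s * of_rV w s.
Proof.
move=> [mono transl conv] diffr [Ph0 Ph1] Hmin.
set f := fun w : 'rV[R]_#|S| => rho (of_rV w).
set v0 := to_rV V0.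
have fv0 : f v0 = rho V0 by rewrite /f /v0 of_rVK.
have df := diffr v0.
set dg := 'd f v0.
have G : forall u, dg u <= f (v0 + u) - f v0.
  move=> u; apply: dir_le => //; exists 1 => // l /andP[l0 l1].
  have E : of_rV (v0 + l *: u) = fun s => l * of_rV (v0 + u) s + (1 - l) * of_rV v0 s.
    by apply/funext => s; rewrite /of_rV !mxE; ring.
  have := conv (of_rV (v0 + u)) (of_rV v0) l; rewrite -E.
  rewrite /f; move=> /(_ _) H; have := H ltac:(apply/andP; split; lra).
  lra.
set mu := fun s => - dg (delta_mx 0 (enum_rank s)).
have dgE : forall w, dg w = - \sum_s mu s * of_rV w s.
  move=> w; rewrite rV_expand -sumrN; apply: eq_bigr => s _; rewrite /mu; ring.
have mu0 : forall s, 0 <= mu s.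
  move=> s; rewrite /mu oppr_ge0; apply: (le_trans (G _)).
  rewrite subr_le0 /f; apply: mono => x; rewrite of_rVD lerDl /of_rV mxE; exact: ler0n.
have one : forall c : R, of_rV (v0 + const_mx c) = fun s => V0 s + c.
  by move=> c; apply/funext => s; rewrite of_rVD /v0 of_rVK /of_rV mxE.
have mu1 : \sum_s mu s = 1.
  have h1 := G (const_mx 1); have h2 := G (const_mx (-1)).
  rewrite !dgE /f !one !transl -/(f v0) fv0 in h1 h2.
  have e1 : \sum_s mu s * of_rV (const_mx (-1 : R)) s = - \sum_s mu s.
    by rewrite -sumrN; apply: eq_bigr => s _; rewrite /of_rV mxE mulrN1.
  have e2 : \sum_s mu s * of_rV (const_mx (1 : R)) s = \sum_s mu s.
    by apply: eq_bigr => s _; rewrite /of_rV mxE mulr1.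
  rewrite e1 e2 in h1 h2; lra.
have pen : (penalty rho mu <= (- rho V0 - expect mu V0)%:E)%E.
  apply: ge_ereal_sup => _ [W _ <-]; rewrite lee_fin.
  have := G (to_rV W - v0).
  have -> : v0 + (to_rV W - v0) = to_rV W by rewrite addrC subrK.
  rewrite dgE /f of_rVK -/(f v0) fv0.
  have -> : \sum_s mu s * of_rV (to_rV W - v0) s = expect mu W - expect mu V0.
    rewrite /expect -sumrB; apply: eq_bigr => s _.
    by rewrite of_rVB /v0 !of_rVK; ring.
  lra.
have H1 := Hmin mu (conj mu0 mu1).
have lowW : forall W, rho V0 - expect Ph W + expect Ph V0 <= rho W.
  move=> W.
  have : ((- rho W - expect Ph W)%:E <= penalty rho Ph)%E.
    by apply: ereal_sup_ubound; exists W.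
  move=> /(leeD2r (expect Ph V0)%:E) H2.
  have := le_trans H2 (le_trans H1 (leeD2r _ pen)).
  rewrite -!EFinD lee_fin; lra.
move=> w; apply: (@diff_eq_lower _ _ f v0 (fun w => - \sum_s Ph s * of_rV w s)) => //.
  by move=> t v; rewrite mulrN mulr_sumr; congr (- _); apply: eq_bigr => s _; rewrite of_rVZ; ring.
exists 1 => // h _.
have := lowW (of_rV (v0 + h)); rewrite -fv0.
have -> : expect Ph (of_rV (v0 + h)) = expect Ph V0 + \sum_s Ph s * of_rV h s.
  rewrite /expect -big_split; apply: eq_bigr => s _.
  by rewrite of_rVD /v0 of_rVK /= mulrDr.
rewrite /f /=; lra.
Qed.

Lemma grad_ln (R : realType) d (p : 'rV[R]_d -> R) th v :
  differentiable p th -> 0 < p th ->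
  'D_v (fun t => ln (p t)) th = 'd p th v / p th.
Proof.
move=> dp p0.
have [dl dv] := is_derive1_ln p0.
have dln : differentiable (@ln R) (p th) by apply/derivable1_diffP.
have dc : differentiable ((@ln R) \o p) th by apply: differentiable_comp.
rewrite (_ : (fun t => ln (p t)) = (@ln R) \o p) //.
rewrite deriveE // diff_comp // /= diff1E // derive1E.
rewrite dv.
by []. Qed.



Definition Kmat {R : realType} {S A : finType} (p : S -> A -> R)
  (Ph : S -> A -> S -> R) (s s' : S) : R := \sum_a p s a * Ph s a s'.

Definition xsol {R : realType} {S A : finType} {d : nat} (g : R)
  (p : S -> A -> R) (Ph : S -> A -> S -> R)
  (Dp : S -> A -> {linear 'rV[R]_d -> R}) (Q : S -> A -> R) (i : 'I_d) : S -> R :=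
  solfix (Kmat p Ph) g (fun s => \sum_a Dp s a (delta_mx 0 i) * Q s a).

Lemma Kmat_dist (R : realType) (S A : finType) (p : S -> A -> R) Ph :
  (forall s, is_dist (p s)) -> (forall s a, is_dist (Ph s a)) ->
  (forall s s', 0 <= Kmat p Ph s s') /\ (forall s, \sum_s' Kmat p Ph s s' = 1).
Proof.
move=> hp hP; split.
  by move=> s s'; apply: sumr_ge0 => a _; apply: mulr_ge0; [case: (hp s)|case: (hP s a)].
move=> s; rewrite /Kmat exchange_big /=.
rewrite -(proj2 (hp s)); apply: eq_bigr => a _.
by rewrite -mulr_sumr (proj2 (hP s a)) mulr1.
Qed.

Lemma xh_fix (R : realType) (S A : finType) d (g : R) (p : S -> A -> R) Ph
  (Dp : S -> A -> {linear 'rV[R]_d -> R}) Q :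
  0 <= g < 1 -> (forall s, is_dist (p s)) -> (forall s a, is_dist (Ph s a)) ->
  forall (h : 'rV[R]_d) s, \sum_i h 0 i * xsol g p Ph Dp Q i s =
    \sum_a Dp s a h * Q s a +
    g * \sum_a p s a * \sum_s' Ph s a s' * (\sum_i h 0 i * xsol g p Ph Dp Q i s').
Proof.
move=> hg hp hP h s.
have [K0 K1] := @Kmat_dist R S A p Ph hp hP.
have E : forall i s, xsol g p Ph Dp Q i s = \sum_a Dp s a (delta_mx 0 i) * Q s a
   + g * \sum_t' Kmat p Ph s t' * xsol g p Ph Dp Q i t'.
  by move=> i s0; exact: (@solfixP R S (Kmat p Ph) g (fun s => \sum_a Dp s a (delta_mx 0 i) * Q s a) hg K0 K1).
under eq_bigr do rewrite E mulrDr.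
rewrite big_split /=; congr (_ + _).
  have Dh : forall s a, Dp s a h = \sum_i h 0 i * Dp s a (delta_mx 0 i).
    by move=> s0 a; rewrite {1}(row_sum_delta h) linear_sum; apply: eq_bigr => i _; rewrite linearZ.
  under [RHS]eq_bigr do rewrite Dh mulr_suml.
  rewrite [RHS]exchange_big /=; apply: eq_bigr => i _.
  by rewrite mulr_sumr; apply: eq_bigr => a _; rewrite mulrA.
transitivity (g * \sum_t' Kmat p Ph s t' * \sum_i h 0 i * xsol g p Ph Dp Q i t').
  transitivity (\sum_i \sum_t' g * h 0 i * Kmat p Ph s t' * xsol g p Ph Dp Q i t').
    apply: eq_bigr => i _; rewrite mulrCA mulr_sumr mulr_sumr; apply: eq_bigr => t _; ring.
  rewrite exchange_big /= [RHS]mulr_sumr; apply: eq_bigr => t _.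
  rewrite mulrA mulr_sumr; apply: eq_bigr => i _; ring.
congr (g * _); rewrite /Kmat.
under [RHS]eq_bigr do rewrite mulr_sumr.
rewrite [RHS]exchange_big /=; apply: eq_bigr => t _.
by rewrite mulr_suml; apply: eq_bigr => a _; ring.
Qed.


Lemma sd_dist (R : realType) (S A : finType) (p : S -> A -> R) (Ph : S -> A -> S -> R) s0 :
  (forall s, is_dist (p s)) -> (forall s a, is_dist (Ph s a)) ->
  forall t, is_dist (state_dist p Ph s0 t).
Proof.
move=> hp hP; elim=> [|t [IH0 IH1]].
  split; first by move=> s /=; exact: ler0n.
  by rewrite /= (bigD1 s0) //= eqxx big1 ?addr0 // => s /negbTE ->.
split.
  move=> s /=; apply: sumr_ge0 => s' _; apply: sumr_ge0 => a _.
  by apply: mulr_ge0; [apply: mulr_ge0; [exact: IH0 | case: (hp s')] | case: (hP s' a)].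
rewrite /= exchange_big /= -IH1; apply: eq_bigr => s' _.
rewrite exchange_big /=.
transitivity (\sum_a state_dist p Ph s0 t s' * p s' a).
  apply: eq_bigr => a _; rewrite -mulr_sumr (proj2 (hP s' a)); ring.
by rewrite -mulr_sumr (proj2 (hp s')) mulr1.
Qed.

Lemma telesc (R : realType) (S A : finType) (p : S -> A -> R) (Ph : S -> A -> S -> R)
  (g : R) (x y : S -> R) s0 :
  (forall s, x s = y s + g * \sum_s' Kmat p Ph s s' * x s') ->
  forall N, \sum_(t < N) g ^+ t * \sum_s' state_dist p Ph s0 t s' * y s' =
    x s0 - g ^+ N * \sum_s' state_dist p Ph s0 N s' * x s'.
Proof.
move=> hx; elim=> [|N IH].
  rewrite big_ord0 expr0 mul1r /= (bigD1 s0) //= eqxx mul1r big1 ?addr0 ?subrr //.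
  by move=> s /negbTE ->; rewrite mul0r.
rewrite big_ord_recr /= IH.
have E : \sum_s' state_dist p Ph s0 N.+1 s' * x s' =
    \sum_s' state_dist p Ph s0 N s' * \sum_s'' Kmat p Ph s' s'' * x s''.
  rewrite /=.
  under eq_bigr do rewrite mulr_suml.
  rewrite exchange_big /=; apply: eq_bigr => s' _.
  rewrite mulr_sumr; apply: eq_bigr => s'' _.
  rewrite /Kmat !mulr_suml mulr_sumr; apply: eq_bigr => a _; ring.
have Ey : \sum_s' state_dist p Ph s0 N s' * y s' =
    \sum_s' state_dist p Ph s0 N s' * x s' -
    g * \sum_s' state_dist p Ph s0 N s' * \sum_s'' Kmat p Ph s' s'' * x s''.
  rewrite mulr_sumr -sumrB; apply: eq_bigr => s' _; rewrite (hx s'); ring.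
rewrite Ey E exprSr; ring.
Qed.


Lemma le_sum_term (R : realType) (T : finType) (F : T -> R) t :
  (forall t, 0 <= F t) -> F t <= \sum_t F t.
Proof. by move=> F0; rewrite (bigD1 t) //= lerDl; apply: sumr_ge0 => *. Qed.

Lemma near_norm_lt (R : realType) d (r : R) : 0 < r ->
  \forall h \near (0 : 'rV[R]_d), `|h| < r.
Proof. by move=> r0; apply/nbhs_norm0P; exists r. Qed.

Lemma sum_sub_g (R : realType) (T : finType) (X Y : T -> R) (g : R) :
  \sum_t (X t - g * Y t) = \sum_t X t - g * \sum_t Y t.
Proof. by rewrite sumrB mulr_sumr. Qed.

Lemma core_lip (R : realType) (S A : finType) d (g : R)
  (p : S -> A -> R) (pp : 'rV[R]_d -> S -> A -> R)
  (Dp : S -> A -> {linear 'rV[R]_d -> R}) (Q : S -> A -> R)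
  (e : 'rV[R]_d -> S -> R) (sg : S -> A -> 'rV[R]_d -> R) (Kp CQ : R) (h : 'rV[R]_d) :
  0 <= g < 1 -> 0 <= Kp ->
  (forall s a h, `|Dp s a h| <= Kp * `|h|) ->
  (forall s, \sum_a `|Q s a| <= CQ) ->
  (forall s, is_dist (pp h s)) ->
  (forall s, e h s = \sum_a ((pp h s a - p s a) * Q s a - g * (pp h s a * sg s a h))) ->
  (forall M, (forall s', `|e h s'| <= M) -> forall s a, `|sg s a h| <= M) ->
  (forall s a, `|pp h s a - p s a - Dp s a h| <= 1 * `|h|) ->
  forall s, `|e h s| <= (Kp + 1) * CQ * `|h| / (1 - g).
Proof.
move=> hg Kp0 DpB QB Hd He Hsg Hpi s.
have [g0 g1] : 0 <= g /\ g < 1 by apply/andP.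
apply: max_contr => // M HM t.
rewrite He sum_sub_g.
apply: (le_trans (ler_normB _ _)); apply: lerD.
  apply: (le_trans (ler_norm_sum _ _ _)).
  apply: (@le_trans _ _ (\sum_a ((Kp + 1) * `|h|) * `|Q t a|)).
    apply: ler_sum => a _; rewrite normrM; apply: ler_wpM2r => //.
    have := Hpi t a; have := DpB t a h; have := normr_ge0 h.
    have := ler_normD (pp h t a - p t a - Dp t a h) (Dp t a h).
    rewrite subrK; nra.
  rewrite -mulr_sumr mulrAC; apply: ler_wpM2r => //; apply: ler_wpM2l; [lra | exact: QB].
rewrite normrM ger0_norm //; apply: ler_wpM2l => //.
apply: avg_bound; [by case: (Hd t) | by case: (Hd t) | by move=> a; apply: Hsg].
Qed.

Lemma sum_lin (R : realType) (T : finType) (a1 a2 a3 a4 t a5 : T -> R) g :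
  (forall x, a1 x - g * a2 x - (a3 x + g * a4 x) = t x + g * a5 x) ->
  \sum_x a1 x - g * \sum_x a2 x - (\sum_x a3 x + g * \sum_x a4 x) =
  \sum_x t x + g * \sum_x a5 x.
Proof.
move=> H.
transitivity (\sum_x (a1 x - g * a2 x - (a3 x + g * a4 x) - g * a5 x) + g * \sum_x a5 x).
  rewrite !sumrB big_split /= -!mulr_sumr; ring.
by congr (_ + _); apply: eq_bigr => x _; rewrite H; ring.
Qed.

Lemma core_pt (R : realType) (S A : finType) d (g : R)
  (p : S -> A -> R) (pp : 'rV[R]_d -> S -> A -> R)
  (Dp : S -> A -> {linear 'rV[R]_d -> R}) (Q : S -> A -> R)
  (Ph : S -> A -> S -> R)
  (e : 'rV[R]_d -> S -> R) (sg : S -> A -> 'rV[R]_d -> R)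
  (Kp CQ C eta dl : R) (h : 'rV[R]_d) :
  0 <= g < 1 -> 0 <= Kp -> 0 <= C -> 0 < eta ->
  (forall s, is_dist (p s)) -> (forall s a, is_dist (Ph s a)) ->
  (forall s a h, `|Dp s a h| <= Kp * `|h|) ->
  (forall s, \sum_a `|Q s a| <= CQ) ->
  (forall s, is_dist (pp h s)) ->
  (forall s, e h s = \sum_a ((pp h s a - p s a) * Q s a - g * (pp h s a * sg s a h))) ->
  (forall M, M < dl -> (forall s', `|e h s'| <= M) -> forall s a,
      `|sg s a h + \sum_s' Ph s a s' * e h s'| <= eta * M) ->
  (forall s a, `|pp h s a - p s a - Dp s a h| <= 1 * `|h|) ->
  (forall s a, `|pp h s a - p s a - Dp s a h| <= eta * `|h|) ->
  (forall s, `|e h s| <= C * `|h|) ->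
  `|h| <= eta -> C * `|h| < dl ->
  forall s, `|e h s - \sum_i h 0 i * xsol g p Ph Dp Q i s| <=
     eta * (CQ + #|A|%:R * ((Kp + 1) * C + C)) * `|h| / (1 - g).
Proof.
move=> hg Kp0 C0 eta0 hp hP DpB QB Hd He Hsig Hpi1 Hpie HL hs hdl.
have [g0 g1] : 0 <= g /\ g < 1 by apply/andP.
have nh := normr_ge0 h.
set z := fun s' => e h s' - \sum_i h 0 i * xsol g p Ph Dp Q i s'.
have HX := @xh_fix R S A d g p Ph Dp Q hg hp hP h.
set rho := fun t => \sum_a ((pp h t a - p t a - Dp t a h) * Q t a
   + g * ((pp h t a - p t a) * \sum_s' Ph t a s' * e h s')
   - g * (pp h t a * (sg t a h + \sum_s' Ph t a s' * e h s'))).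
have zE : forall t, z t = rho t + g * \sum_a p t a * \sum_s' Ph t a s' * z s'.
  move=> t; rewrite /z He HX /rho sum_sub_g.
  apply: sum_lin => a.
  have -> : \sum_s' Ph t a s' * (e h s' - \sum_i h 0 i * xsol g p Ph Dp Q i s') =
     \sum_s' Ph t a s' * e h s' - \sum_s' Ph t a s' * \sum_i h 0 i * xsol g p Ph Dp Q i s'.
    by rewrite -sumrB; apply: eq_bigr => s' _; ring.
  ring.
have Hrho : forall t, `|rho t| <= eta * (CQ + #|A|%:R * ((Kp + 1) * C + C)) * `|h|.
  move=> t; rewrite /rho; apply: (le_trans (ler_norm_sum _ _ _)).
  apply: (@le_trans _ _ (\sum_a (eta * `|h| * `|Q t a| + ((Kp + 1) * C + C) * (eta * `|h|)))).
    apply: ler_sum => a _.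
    have f1 := Hpie t a.
    have f2 : `|pp h t a - p t a| <= (Kp + 1) * `|h|.
      have := Hpi1 t a; have := DpB t a h.
      have := ler_normD (pp h t a - p t a - Dp t a h) (Dp t a h).
      rewrite subrK; nra.
    have f3 : `|\sum_s' Ph t a s' * e h s'| <= C * `|h|.
      by apply: avg_bound; [case: (hP t a) | case: (hP t a) | exact: HL].
    have f4 := Hsig (C * `|h|) hdl HL t a.
    have /andP[f5 f6] : 0 <= pp h t a <= 1.
      case: (Hd t) => H0 H1; rewrite H0 /= -H1; exact: (@le_sum_term R A (pp h t) a H0).
    move: f1 f2 f3 f4.
    move: (pp h t a - p t a - Dp t a h) => B1.
    move: (pp h t a - p t a) => B2.
    move: (\sum_s' Ph t a s' * e h s') => E.
    move=> f1 f2 f3; move: (sg t a h + E) => tau f4.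
    have n1 := normr_ge0 B1; have n2 := normr_ge0 B2; have n3 := normr_ge0 E.
    have n4 := normr_ge0 tau; have n5 := normr_ge0 (Q t a).
    have p1 : `|B1| * `|Q t a| <= eta * `|h| * `|Q t a| by apply: ler_wpM2r.
    have p2 : `|B2| * `|E| <= ((Kp + 1) * `|h|) * (C * `|h|) by apply: ler_pM.
    have p3 : ((Kp + 1) * `|h|) * (C * `|h|) <= ((Kp + 1) * C) * (eta * `|h|).
      have : 0 <= (Kp + 1) * C * `|h| by apply: mulr_ge0 => //; apply: mulr_ge0 => //; lra.
      nra.
    have p4 : g * (`|B2| * `|E|) <= `|B2| * `|E|.
      have : 0 <= `|B2| * `|E| by apply: mulr_ge0.
      nra.
    have q : g * pp h t a <= 1 by rewrite -[1]mulr1; apply: ler_pM => //; lra.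
    have p5 : g * (pp h t a * `|tau|) <= `|tau|.
      have : 0 <= (1 - g * pp h t a) * `|tau| by apply: mulr_ge0 => //; lra.
      nra.
    apply: (le_trans (ler_normB _ _)).
    rewrite !normrM (ger0_norm g0) (ger0_norm f5).
    apply: (le_trans (lerD (ler_normD _ _) (lexx _))).
    rewrite !normrM (ger0_norm g0).
    nra.
  rewrite big_split /= sumr_const -mulr_sumr -mulr_natl.
  have := QB t; have : 0 <= eta * `|h| by apply: mulr_ge0 => //; lra.
  nra.
move=> s; change (`|z s| <= eta * (CQ + #|A|%:R * ((Kp + 1) * C + C)) * `|h| / (1 - g)).
apply: max_contr => // M HM t.
rewrite zE; apply: (le_trans (ler_normD _ _)); apply: lerD; first exact: Hrho.
rewrite normrM ger0_norm //; apply: ler_wpM2l => //.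
apply: avg_bound; [by case: (hp t) | by case: (hp t) | move=> a].
by apply: avg_bound; [case: (hP t a) | case: (hP t a) | exact: HM].
Qed.

Lemma core (R : realType) (S A : finType) d (g : R)
  (p : S -> A -> R) (pp : 'rV[R]_d -> S -> A -> R)
  (Dp : S -> A -> {linear 'rV[R]_d -> R}) (Q : S -> A -> R)
  (Ph : S -> A -> S -> R)
  (e : 'rV[R]_d -> S -> R) (sg : S -> A -> 'rV[R]_d -> R) :
  0 <= g < 1 ->
  (forall s, is_dist (p s)) -> (forall s a, is_dist (Ph s a)) ->
  (\forall h \near (0 : 'rV[R]_d), forall s, is_dist (pp h s)) ->
  (\forall h \near (0 : 'rV[R]_d), forall s,
      e h s = \sum_a ((pp h s a - p s a) * Q s a - g * (pp h s a * sg s a h))) ->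
  (forall h M, (forall s', `|e h s'| <= M) -> forall s a, `|sg s a h| <= M) ->
  (forall eps, 0 < eps -> exists2 dl, 0 < dl & forall h M, M < dl ->
      (forall s', `|e h s'| <= M) -> forall s a,
      `|sg s a h + \sum_s' Ph s a s' * e h s'| <= eps * M) ->
  (forall eps, 0 < eps -> \forall h \near (0 : 'rV[R]_d), forall s a,
      `|pp h s a - p s a - Dp s a h| <= eps * `|h|) ->
  forall eps, 0 < eps -> \forall h \near (0 : 'rV[R]_d), forall s,
    `|e h s - \sum_i h 0 i * xsol g p Ph Dp Q i s| <= eps * `|h|.
Proof.
move=> hg hp hP hpp heq hsg hsig hpi eps eps0.
have [g0 g1] : 0 <= g /\ g < 1 by apply/andP.
set Kp := \sum_s \sum_a \sum_i `|Dp s a (delta_mx 0 i)|.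
have Kp0 : 0 <= Kp by do 3! (apply: sumr_ge0 => ? _).
have DpB : forall s a h, `|Dp s a h| <= Kp * `|h|.
  move=> s a h; apply: (le_trans (@lin_bound R d (Dp s a) h)); apply: ler_wpM2r => //.
  apply: (le_trans _ (@le_sum_term R S (fun s => \sum_a \sum_i `|Dp s a (delta_mx 0 i)|) s _)); last first.
    by move=> ?; do 2! (apply: sumr_ge0 => ? _).
  apply: (le_trans _ (@le_sum_term R A (fun a => \sum_i `|Dp s a (delta_mx 0 i)|) a _)) => //.
  by move=> ?; apply: sumr_ge0 => ? _.
set CQ := \sum_s \sum_a `|Q s a|.
have QB : forall s, \sum_a `|Q s a| <= CQ.
  move=> s; apply: (@le_sum_term R S (fun s => \sum_a `|Q s a|) s).
  by move=> ?; apply: sumr_ge0 => ? _.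
have CQ0 : 0 <= CQ by do 2! (apply: sumr_ge0 => ? _).
set C := (Kp + 1) * CQ / (1 - g).
have C0 : 0 <= C by rewrite /C; apply: divr_ge0; [apply: mulr_ge0 => //; lra | lra].
set B := CQ + #|A|%:R * ((Kp + 1) * C + C).
have B0 : 0 <= B.
  rewrite /B; apply: addr_ge0 => //; apply: mulr_ge0 => //.
  by apply: addr_ge0 => //; apply: mulr_ge0 => //; lra.
set eta := eps * (1 - g) / (B + 1).
have eta0 : 0 < eta by rewrite /eta; apply: divr_gt0; [apply: mulr_gt0 => //; lra | lra].
have [dl dl0 Hsig] := hsig eta eta0.
set r := Num.min eta (dl / (C + 1)).
have r0 : 0 < r by rewrite /r lt_min eta0 /=; apply: divr_gt0 => //; lra.
near=> h.
have Hd : forall s, is_dist (pp h s) by near: h; apply: hpp.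
have He : forall s, e h s = \sum_a ((pp h s a - p s a) * Q s a - g * (pp h s a * sg s a h))
  by near: h; apply: heq.
have Hpi1 : forall s a, `|pp h s a - p s a - Dp s a h| <= 1 * `|h| by near: h; apply: hpi.
have Hpie : forall s a, `|pp h s a - p s a - Dp s a h| <= eta * `|h| by near: h; apply: hpi.
have hr : `|h| < r by near: h; apply: near_norm_lt.
have HL : forall s, `|e h s| <= C * `|h|.
  move=> s; rewrite /C mulrAC; exact: (@core_lip R S A d g p pp Dp Q e sg Kp CQ h hg Kp0 DpB QB Hd He (hsg h) Hpi1).
have nh := normr_ge0 h.
have hs : `|h| <= eta by apply: ltW; apply: (lt_le_trans hr); rewrite /r ge_min lexx.
have hdl : C * `|h| < dl.
  have : `|h| < dl / (C + 1) by apply: (lt_le_trans hr); rewrite /r ge_min lexx orbT.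
  rewrite ltr_pdivlMr; last by lra.
  nra.
move=> s.
apply: (le_trans (@core_pt R S A d g p pp Dp Q Ph e sg Kp CQ C eta dl h hg Kp0 C0 eta0 hp hP DpB QB Hd He (Hsig h) Hpi1 Hpie HL hs hdl s)).
rewrite -/B /eta.
have e1 : eps * (1 - g) / (B + 1) * B * `|h| / (1 - g) = eps * `|h| * (B / (B + 1)).
  field; lra.
rewrite e1; rewrite -[leRHS]mulr1; apply: ler_wpM2l.
  by apply: mulr_ge0 => //; lra.
rewrite ler_pdivrMr; last by lra.
lra.
Unshelve. all: by end_near.
Qed.


Lemma near_forall2 (R : realType) (V : normedModType R) (S A : finType)
  (P : S -> A -> V -> Prop) :
  (forall s a, \forall w \near (0 : V), P s a w) ->
  \forall w \near (0 : V), forall s a, P s a w.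
Proof.
move=> H.
have H1 : forall s, \forall w \near (0 : V), forall a, P s a w.
  by move=> s; apply: filter_forall => a; apply: H.
by apply: filter_forall.
Qed.

Theorem mainTheorem5 (R : realType) (S A : finType)
  (P : S -> A -> S -> R) (r : S -> A -> R) (gamma : R)
  (sigma : (S -> R) -> (S -> R) -> R)
  (d : nat) (Theta : set 'rV[R]_d)
  (pi : 'rV[R]_d -> S -> A -> R) (V : 'rV[R]_d -> S -> R)
  (Phat : 'rV[R]_d -> S -> A -> S -> R) :
  (forall s a, is_dist (P s a)) ->
  (forall s a, 0 <= r s a <= 1) ->
  0 <= gamma < 1 ->
  (forall s a, convex_risk_measure (sigma (P s a))) ->
  open Theta ->
  (forall th, Theta th -> forall s, is_dist (pi th s)) ->
  (forall s a th, Theta th -> differentiable (fun t => pi t s a) th) ->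
  (forall s a (v : 'rV[R]_#|S|),
     differentiable (fun w : 'rV[R]_#|S| => sigma (P s a) (of_rV w)) v) ->
  (forall th, Theta th -> bellman r gamma (fun s a => sigma (P s a)) (pi th) (V th)) ->
  (forall th, Theta th -> forall s a,
     is_dist (Phat th s a) /\
     (forall mu : S -> R, is_dist mu ->
        (penalty (sigma (P s a)) (Phat th s a) + (expect (Phat th s a) (V th))%:E
         <= penalty (sigma (P s a)) mu + (expect mu (V th))%:E)%E)) ->
  forall th, Theta th -> forall s : S,
    differentiable (fun t => V t s) th /\
    (fun N : nat => \sum_(t < N) (gamma ^+ t *:
        \sum_(s' : S) \sum_(a : A)
          ((state_dist (pi th) (Phat th) s t s' * pi th s' a
            * Qfun r gamma (fun s1 a1 => sigma (P s1 a1)) (V th) s' a)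
           *: grad (fun t' => ln (pi t' s' a)) th)))
      @ \oo --> grad (fun t => V t s) th.
Proof.
move=> hPd hr hg hconv hopen hpid hpidiff hsdiff hbell hPhat th Hth s0.
have [g0 g1] : 0 <= gamma /\ gamma < 1 by apply/andP.
have nT : \forall h \near (0 : 'rV[R]_d), Theta (th + h).
  have : nbhs th Theta by apply: open_nbhs_nbhs; split.
  by move/nbhs0P.
pose p := pi th.
pose V0 := V th.
pose Ph := Phat th.
pose Q := fun s a => r s a - gamma * sigma (P s a) V0.
pose Dp := fun s a => 'd (fun t => pi t s a) th.
pose e := fun h s => V (th + h) s - V0 s.
pose sg := fun s a h => sigma (P s a) (V (th + h)) - sigma (P s a) V0.
have hp : forall s, is_dist (p s) := hpid th Hth.
have hPh : forall s a, is_dist (Ph s a) by move=> s a; case: (hPhat th Hth s a).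
have dpi : forall s a, differentiable (fun t => pi t s a) th by move=> s a; apply: hpidiff.
have c1 : \forall h \near (0 : 'rV[R]_d), forall s, is_dist (pi (th + h) s).
  by apply: filterS nT => h hT; apply: hpid.
have c2 : \forall h \near (0 : 'rV[R]_d), forall s, e h s =
    \sum_a ((pi (th + h) s a - p s a) * Q s a - gamma * (pi (th + h) s a * sg s a h)).
  apply: filterS nT => h hT s.
  rewrite /e (hbell _ hT s) /V0 (hbell _ Hth s) -sumrB; apply: eq_bigr => a _.
  rewrite /Q /sg /p /V0; ring.
have c3 : forall h M, (forall s', `|e h s'| <= M) -> forall s a, `|sg s a h| <= M.
  move=> h M HM s a.
  have [mono transl _] := hconv s a.
  have lo : sigma (P s a) V0 - M <= sigma (P s a) (V (th + h)).
    rewrite -(transl V0 M); apply: mono => x; have := HM x; rewrite /e ler_norml; lra.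
  have hi : sigma (P s a) (V (th + h)) <= sigma (P s a) V0 + M.
    have T := transl V0 (- M); rewrite opprK in T; rewrite -T.
    apply: mono => x; have := HM x; rewrite /e ler_norml; lra.
  rewrite /sg ler_norml; apply/andP; split; lra.
have c4 : forall eps, 0 < eps -> exists2 dl, 0 < dl & forall h M, M < dl ->
    (forall s', `|e h s'| <= M) -> forall s a,
    `|sg s a h + \sum_s' Ph s a s' * e h s'| <= eps * M.
  move=> eps eps0.
  have H : \forall w \near (0 : 'rV[R]_#|S|), forall s a,
      `|sigma (P s a) (of_rV (to_rV V0 + w)) - sigma (P s a) (of_rV (to_rV V0))
        - 'd (fun w => sigma (P s a) (of_rV w)) (to_rV V0) w| <= eps * `|w|.
    apply: near_forall2 => s a.
    exact: (@diff_eps R _ (fun w => sigma (P s a) (of_rV w)) (to_rV V0) (hsdiff s a _) eps eps0).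
  have [dl dl0 Hdl] := near0_ball H.
  exists dl => // h M HM HeM s a.
  have M0 : 0 <= M by exact: le_trans (normr_ge0 _) (HeM s).
  have wM : `|to_rV (e h)| <= M.
    by apply: mx_norm_leP => // i j; rewrite /to_rV mxE; apply: HeM.
  have := Hdl (to_rV (e h)) (le_lt_trans wM HM) s a.
  have [mono transl conv] := hconv s a.
  rewrite (@sigma_grad R S (sigma (P s a)) (Ph s a) V0 (hconv s a) (hsdiff s a) (hPh s a) (fun mu hmu => (hPhat th Hth s a).2 mu hmu)).
  have -> : of_rV (to_rV V0 + to_rV (e h)) = V (th + h).
    by apply/funext => x; rewrite of_rVD !of_rVK /e /V0 subrKC.
  rewrite of_rVK of_rVK => H1.
  apply: (le_trans _ (ler_wpM2l (ltW eps0) wM)); move: H1.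
  by rewrite /sg opprK.
have c5 : forall eps, 0 < eps -> \forall h \near (0 : 'rV[R]_d), forall s a,
    `|pi (th + h) s a - p s a - Dp s a h| <= eps * `|h|.
  move=> eps eps0.
  apply: near_forall2 => s a.
  exact: (@diff_eps R _ (fun t => pi t s a) th (dpi s a) eps eps0).
have Hcore := @core R S A d gamma p (fun h => pi (th + h)) Dp Q Ph e sg hg hp hPh c1 c2 c3 c4 c5.
pose xs := xsol gamma p Ph Dp Q.
pose Lf := fun h : 'rV[R]_d => \sum_i h 0 i * xs i s0.
have lin : linear Lf.
  move=> a u v; rewrite /Lf scaler_sumr -big_split; apply: eq_bigr => i _; rewrite !mxE /=.
  change (a *: (u 0 i * xs i s0)) with (a * (u 0 i * xs i s0)); ring.
pose LM := GRing.isLinear.Build _ _ _ _ _ lin.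
pose L : {linear 'rV[R]_d -> R} := HB.pack Lf LM.
have LE : forall h, L h = \sum_i h 0 i * xs i s0 by [].
have Lc : continuous L.
  apply: bounded_linear_continuous; apply/linear_boundedP.
  apply: filterS (nbhs_pinfty_ge (num_real (\sum_i `|xs i s0|))) => M HM x; rewrite LE.
  apply: (le_trans (ler_norm_sum _ _ _)).
  apply: (@le_trans _ _ (\sum_i `|x| * `|xs i s0|)).
    apply: ler_sum => i _; rewrite normrM; apply: ler_wpM2r => //.
    exact: mx_entry_le.
  by rewrite -mulr_sumr mulrC; apply: ler_wpM2r.
have [dV dVE] : differentiable (fun t => V t s0) th /\ 'd (fun t => V t s0) th = L :> ('rV[R]_d -> R).
  apply: diff_of_eps => // eps eps0.
  by apply: filterS (Hcore eps eps0) => h /(_ s0).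
split => //.
have gradE : grad (fun t => V t s0) th = \row_i xs i s0.
  apply/rowP => i; rewrite !mxE deriveE // dVE LE.
  rewrite (bigD1 i) //= big1 ?addr0 => [|j /negbTE nji]; rewrite !mxE.
    by rewrite !eqxx mul1r.
  by rewrite eqxx nji mul0r.
have Dp0 : forall s' a, pi th s' a = 0 -> forall v, Dp s' a v = 0.
  move=> s' a p0 v; rewrite /Dp.
  apply: (@diff_eq_lower R _ (fun t => pi t s' a) th (fun _ => 0)) => //.
    by move=> t w; rewrite mulr0.
  have [r0 r00 Hr] := near0_ball nT.
  exists r0 => // h hh; rewrite p0 addr0.
  by case: (hpid _ (Hr h hh) s') => + _; apply.
have lnt : forall s' a i c, c * pi th s' a * 'D_(delta_mx 0 i) (fun t => ln (pi t s' a)) th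
    = c * Dp s' a (delta_mx 0 i).
  move=> s' a i c.
  have := (proj1 (hp s')) a; rewrite /p le_eqVlt => /orP[/eqP p0|ppos].
    by rewrite -p0 Dp0 // mulr0 mul0r.
  rewrite (@grad_ln R d (fun t => pi t s' a) th (delta_mx 0 i) (dpi s' a) ppos) /Dp.
  by field; rewrite gt_eqF.
pose y := fun i s => \sum_a Dp s a (delta_mx 0 i) * Q s a.
have [K0 K1] := @Kmat_dist R S A p Ph hp hPh.
have xfix : forall i s, xs i s = y i s + gamma * \sum_s' Kmat p Ph s s' * xs i s'.
  by move=> i s; exact: (@solfixP R S (Kmat p Ph) gamma (y i) hg K0 K1).
have entE : forall N i, (\sum_(t < N) (gamma ^+ t *:
        \sum_(s' : S) \sum_(a : A)
          ((state_dist (pi th) (Phat th) s0 t s' * pi th s' a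
            * Qfun r gamma (fun s1 a1 => sigma (P s1 a1)) (V th) s' a)
           *: grad (fun t' => ln (pi t' s' a)) th))) 0 i =
     \sum_(t < N) gamma ^+ t * \sum_s' state_dist p Ph s0 t s' * y i s'.
  move=> N i; rewrite summxE; apply: eq_bigr => t _; rewrite mxE summxE; congr (_ * _).
  apply: eq_bigr => s' _; rewrite summxE /y mulr_sumr; apply: eq_bigr => a _.
  rewrite !mxE.
  have -> : state_dist (pi th) (Phat th) s0 t s' * pi th s' a *
      Qfun r gamma (fun s1 a1 => sigma (P s1 a1)) (V th) s' a *
      'D_(delta_mx 0 i) (fun t' => ln (pi t' s' a)) th =
      (state_dist (pi th) (Phat th) s0 t s' * Q s' a) * pi th s' a *
      'D_(delta_mx 0 i) (fun t' => ln (pi t' s' a)) th.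
    by rewrite /Qfun /Q /V0; ring.
  by rewrite lnt /p /Ph; ring.
set Mx := \sum_i \sum_s `|xs i s|.
have Mx0 : 0 <= Mx by do 2! (apply: sumr_ge0 => ? _).
rewrite gradE; apply/cvgrPdist_le => eps eps0.
have eM : 0 < eps / (Mx + 1) by apply: divr_gt0 => //; lra.
have gn : `|gamma| < 1 by rewrite ger0_norm.
have := cvg_expr gn; move/cvgrPdist_le => /(_ _ eM).
apply: filterS => N HN.
apply: mx_norm_leP; first lra.
move=> i0 i; rewrite (ord1 i0) !mxE entE.
rewrite (@telesc R S A p Ph gamma (xs i) (y i) s0 (xfix i) N).
rewrite opprB addrC subrK normrM.
have gN : 0 <= gamma ^+ N by apply: exprn_ge0.
rewrite sub0r normrN ger0_norm // in HN; rewrite ger0_norm //.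
have hY : `|\sum_s' state_dist p Ph s0 N s' * xs i s'| <= Mx.
  have [d0 d1] := @sd_dist R S A p Ph s0 hp hPh N.
  apply: avg_bound => // s.
  apply: (le_trans (@le_sum_term R S (fun s => `|xs i s|) s _)) => //.
  apply: (@le_sum_term R _ (fun i => \sum_s `|xs i s|) i).
  by move=> ?; apply: sumr_ge0.
have nY := normr_ge0 (\sum_s' state_dist p Ph s0 N s' * xs i s').
have : gamma ^+ N * (Mx + 1) <= eps.
  by rewrite -ler_pdivlMr //; lra.
nra.
Qed.
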